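(* Let $K$ be a field with a non-trivial non-Archimedean valuation $|\cdot|$, let $X$ be a complete non-Archimedean normed space over $K$, and let $G$ be an additive (abelian) group. Fix $k\in\mathbb N$, and assume $|2k^4|\neq0$. For $f:G\to X$ define $$\Delta f(x,y)=f(kx+y)+f(kx-y)-k^2[f(x+y)+f(x-y)]-2k^2(k^2-1)f(x)+2(k^2-1)f(y)\qquad(x,y\in G).$$ Let $\psi:G\times G\to[0,\infty)$ be a function such that $$\lim_{n\to\infty}\frac{\psi(k^nx,k^ny)}{|k|^{4n}}=0\quad\text{for all }x,y\in G,$$ and such that for each $x\in G$ the limit $$\tilde\psi(x):=\lim_{n\to\infty}\max\Big\{\frac{\psi(k^jx,0)}{|k|^{4j}}:\ 0\le j<n\Big\}$$ exists. Suppose $f:G\to X$ satisfies $f(0)=0$ and $\|\Delta f(x,y)\|\le\psi(x,y)$ for all $x,y\in G$. Then there exists a quartic mapping $Q:G\to X$ (i.e. $\Delta Q(x,y)=0$ for all $x,y\in G$) such that $$\|Q(x)-f(x)\|\le\frac{1}{|2k^4|}\tilde\psi(x)\quad\text{for all }x\in G.$$ Moreover, if $$\lim_{i\to\infty}\lim_{n\to\infty}\max\Big\{\frac{\psi(k^jx,0)}{|k|^{4j}}:\ i\le j<n+i\Big\}=0\quad\text{for all }x\in G,$$ then $Q$ is the unique quartic mapping satisfying this inequality.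
   Context: A non-Archimedean field is a field $K$ with $|\cdot|:K\to[0,\infty)$ such that $|r|=0$ iff $r=0$, $|rs|=|r||s|$, $|r+s|\le\max\{|r|,|s|\}$. A non-Archimedean norm on a $K$-vector space $X$ satisfies $\|x\|=0$ iff $x=0$, $\|rx\|=|r|\|x\|$, $\|x+y\|\le\max\{\|x\|,\|y\|\}$; complete means every Cauchy sequence converges. Integers are regarded as elements of $K$ and $|k|$ is the valuation of $k$ in $K$. *)

(* Defs.v *)
From HB Require Import structures.
From mathcomp Require Import all_boot all_order all_algebra.
From mathcomp Require Import boolp classical_sets reals topology normedtype sequences.
Set Implicit Arguments. Unset Strict Implicit. Unset Printing Implicit Defensive.
Import Order.TTheory GRing.Theory Num.Theory.
Local Open Scope ring_scope.

Definition nonarch_abs (R : realType) (K : fieldType) (abs : K -> R) : Prop :=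
  (forall r, 0 <= abs r) /\
  (forall r, abs r = 0 <-> r = 0) /\
  (forall r s, abs (r * s) = abs r * abs s) /\
  (forall r s, abs (r + s) <= Num.max (abs r) (abs s)).

Definition nontrivial_abs (R : realType) (K : fieldType) (abs : K -> R) : Prop :=
  exists r : K, abs r != 0 /\ abs r != 1.

Definition nonarch_norm (R : realType) (K : fieldType) (abs : K -> R)
  (X : lmodType K) (nrm : X -> R) : Prop :=
  (forall x, 0 <= nrm x) /\
  (forall x, nrm x = 0 <-> x = 0) /\
  (forall (r : K) x, nrm (r *: x) = abs r * nrm x) /\
  (forall x y, nrm (x + y) <= Num.max (nrm x) (nrm y)).

Definition norm_cauchy (R : realType) (X : zmodType) (nrm : X -> R)
  (u : nat -> X) : Prop :=
  forall e : R, 0 < e -> exists N : nat, forall m n : nat,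
    (N <= m)%N -> (N <= n)%N -> nrm (u m - u n) < e.

Definition norm_converges (R : realType) (X : zmodType) (nrm : X -> R)
  (u : nat -> X) : Prop :=
  exists l : X, forall e : R, 0 < e -> exists N : nat, forall n : nat,
    (N <= n)%N -> nrm (u n - l) < e.

Definition norm_complete (R : realType) (X : zmodType) (nrm : X -> R) : Prop :=
  forall u : nat -> X, norm_cauchy nrm u -> norm_converges nrm u.

Definition Delta (K : fieldType) (X : lmodType K) (G : zmodType) (k : nat)
  (f : G -> X) (x y : G) : X :=
  let kk : K := k%:R in
  f (x *+ k + y) + f (x *+ k - y)
  - (kk ^+ 2) *: (f (x + y) + f (x - y))
  - (2 * kk ^+ 2 * (kk ^+ 2 - 1)) *: f x
  + (2 * (kk ^+ 2 - 1)) *: f y.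

Definition quartic (K : fieldType) (X : lmodType K) (G : zmodType) (k : nat)
  (Q : G -> X) : Prop :=
  forall x y : G, Delta k Q x y = 0.

(* Main.v *)
Require Import Defs.
From HB Require Import structures.
From mathcomp Require Import all_boot all_order all_algebra.
From mathcomp Require Import boolp classical_sets reals topology normedtype sequences.
From mathcomp Require Import ring lra.
Import Order.TTheory GRing.Theory Num.Theory.
Import numFieldNormedType.Exports.
Local Open Scope classical_set_scope.
Local Open Scope ring_scope.

Lemma abs_facts (R : realType) (K : fieldType) (abs : K -> R) :
  nonarch_abs abs ->
  [/\ abs 1 = 1, (forall r, abs (- r) = abs r) &
      (forall r, r != 0 -> abs r^-1 = (abs r)^-1)].
Proof.
move=> [a0 [aeq [aM aD]]].
have a1 : abs 1 = 1.
  have h : abs 1 * abs 1 = abs 1 by rewrite -aM mulr1.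
  have hn : abs 1 != 0 by apply/eqP => /aeq /eqP; rewrite oner_eq0.
  by apply: (mulIf hn); rewrite mul1r.
have aN1 : abs (-1) = 1.
  have h : abs (-1) * abs (-1) = 1 by rewrite -aM mulrNN mulr1.
  have := a0 (-1); move: h; set t := abs (-1) => h t0.
  have : (t - 1) * (t + 1) = 0.
    have -> : (t - 1) * (t + 1) = t * t - 1 by ring.
    by rewrite h subrr.
  move/eqP; rewrite mulf_eq0 => /orP [|]; first by rewrite subr_eq0 => /eqP.
  rewrite addr_eq0 => /eqP ht'; have := t0; rewrite ht' oppr_ge0 ler10 //.
split => // [r|r rn0].
  by rewrite -mulN1r aM aN1 mul1r.
have : abs r * abs r^-1 = 1 by rewrite -aM mulfV.
have an : abs r != 0 by apply/eqP => /aeq /eqP; rewrite (negbTE rn0).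
move=> h; apply: (mulfI an); rewrite h mulfV //.
Qed.
Arguments abs_facts {R K abs}.

Lemma norm_facts (R : realType) (K : fieldType) (abs : K -> R)
  (X : lmodType K) (nrm : X -> R) :
  nonarch_abs abs -> nonarch_norm abs nrm ->
  [/\ nrm 0 = 0, (forall x, nrm (- x) = nrm x),
      (forall x y e, nrm x < e -> nrm y < e -> nrm (x + y) < e) &
      (forall x y e, nrm x <= e -> nrm y <= e -> nrm (x + y) <= e)].
Proof.
move=> ha [n0 [neq [nZ nD]]]; have [a1 aN aV] := abs_facts ha.
split.
- exact/neq.
- by move=> x; rewrite -scaleN1r nZ aN a1 mul1r.
- by move=> x y e hx hy; apply: (le_lt_trans (nD x y)); rewrite gt_max hx hy.
- by move=> x y e hx hy; apply: (le_trans (nD x y)); rewrite ge_max hx hy.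
Qed.
Arguments norm_facts {R K abs X nrm}.
Definition dl (K : fieldType) (G : zmodType) (k : nat) (x y : G) : seq (K * G) :=
  let kk : K := k%:R in
  [:: (1, x *+ k + y); (1, x *+ k - y); (- kk ^+ 2, x + y); (- kk ^+ 2, x - y);
      (- (2 * kk ^+ 2 * (kk ^+ 2 - 1)), x); (2 * (kk ^+ 2 - 1), y)].

Lemma DeltaE (K : fieldType) (X : lmodType K) (G : zmodType) (k : nat)
  (f : G -> X) (x y : G) :
  Delta k f x y = \sum_(p <- dl K G k x y) p.1 *: f p.2.
Proof.
rewrite /Delta /dl !big_cons big_nil /= addr0 !scale1r !scaleNr scalerDr opprD !addrA.
by [].
Qed.

Lemma DeltaB (K : fieldType) (X : lmodType K) (G : zmodType) (k : nat)
  (f g : G -> X) (x y : G) :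
  Delta k (fun z => f z - g z) x y = Delta k f x y - Delta k g x y.
Proof. by rewrite !DeltaE -sumrB; apply: eq_bigr => p _; rewrite scalerBr. Qed.

Lemma DeltaZ (K : fieldType) (X : lmodType K) (G : zmodType) (k : nat)
  (c : K) (f : G -> X) (x y : G) :
  Delta k (fun z => c *: f z) x y = c *: Delta k f x y.
Proof.
by rewrite !DeltaE scaler_sumr; apply: eq_bigr => p _; rewrite !scalerA mulrC.
Qed.

Lemma Delta_mul (K : fieldType) (X : lmodType K) (G : zmodType) (k N : nat)
  (f : G -> X) (x y : G) :
  Delta k (fun z => f (z *+ N)) x y = Delta k f (x *+ N) (y *+ N).
Proof.
by rewrite /Delta !mulrnDl !mulNrn [x *+ k *+ N]mulrnAC.
Qed.

Lemma comb3 (K : fieldType) (X : lmodType K) (A B C : X) (a1 a2 b1 b2 b3 t : K) :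
  a1 *: A + (a2 *: A + (b1 *: B + (b2 *: B + (b3 *: B + (t *: C + 0))))) =
  (a1 + a2) *: A + (b1 + b2 + b3) *: B + t *: C.
Proof. by rewrite !scalerDl addr0 !addrA. Qed.

Lemma Delta0g (K : fieldType) (X : lmodType K) (G : zmodType) (k : nat)
  (h : G -> X) (x : G) :
  Delta k h x 0 = 2 *: h (x *+ k) - (2 * (k%:R : K) ^+ 4) *: h x
                  + (2 * ((k%:R : K) ^+ 2 - 1)) *: h 0.
Proof.
rewrite DeltaE /dl !big_cons big_nil /= !(addr0 (x *+ k)) (addr0 x) !subr0 comb3 -scaleNr.
congr (_ *: _ + _ *: _ + _ *: _); ring.
Qed.

Lemma quartic_scale (K : fieldType) (X : lmodType K) (G : zmodType) (k : nat)
  (h : G -> X) : (2 * (k%:R : K) ^+ 4) != 0 -> quartic k h ->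
  forall x, h (x *+ k) = (k%:R : K) ^+ 4 *: h x.
Proof.
move=> hk hq x.
set kk : K := k%:R.
have k0 : kk != 0 by move: hk; rewrite mulf_eq0 negb_or expf_eq0 /= => /andP [].
have t0 : (2 : K) != 0 by move: hk; rewrite mulf_eq0 negb_or => /andP [].
have h0 : (2 * (kk ^+ 2 - 1)) *: h 0 = 0.
  have := hq 0 0; rewrite Delta0g mul0rn -!scalerBl -scalerDl => /eqP.
  rewrite scaler_eq0 => /orP [|/eqP ->]; last by rewrite scaler0.
  have -> : 2 - 2 * kk ^+ 4 + 2 * (kk ^+ 2 - 1) = - kk ^+ 2 * (2 * (kk ^+ 2 - 1)).
    rewrite /kk; ring.
  rewrite mulf_eq0 oppr_eq0 expf_eq0 /= (negbTE k0) /= => /eqP ->.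
  by rewrite scale0r.
have := hq x 0; rewrite Delta0g h0 addr0 => /eqP; rewrite subr_eq0 => /eqP.
rewrite -scalerA => /(congr1 (fun v => 2^-1 *: v)); rewrite !scalerA mulVf //.
by rewrite scale1r mulrA mulVf ?mul1r.
Qed.

Lemma bigmax_rcons (R : realType) (T : Type) (s : seq T) (x : T) (F : T -> R) :
  \big[Num.max/0]_(i <- rcons s x) F i = Num.max (\big[Num.max/0]_(i <- s) F i) (F x).
Proof.
elim: s => [|y s IH] /=; first by rewrite !big_cons !big_nil maxC.
by rewrite !big_cons IH maxA.
Qed.

Lemma bigmax_recr (R : realType) (n : nat) (F : nat -> R) :
  \big[Num.max/0]_(0 <= i < n.+1) F i = Num.max (\big[Num.max/0]_(0 <= i < n) F i) (F n).
Proof. by rewrite /index_iota !subn0 -addn1 iotaD cats1 bigmax_rcons. Qed.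

Lemma bigmax_scale (R : realType) (n : nat) (s : R) (F : nat -> R) : 0 <= s ->
  \big[Num.max/0]_(0 <= i < n) (s * F i) = s * \big[Num.max/0]_(0 <= i < n) F i.
Proof.
move=> s0; elim: n => [|n IH]; first by rewrite !big_geq // mulr0.
by rewrite !bigmax_recr IH maxr_pMr.
Qed.

Lemma bigmax_ge0 (R : realType) (n : nat) (F : nat -> R) :
  0 <= \big[Num.max/0]_(0 <= i < n) F i.
Proof.
elim: n => [|n IH]; first by rewrite big_geq.
by rewrite bigmax_recr le_max IH.
Qed.

Lemma absX (R : realType) (K : fieldType) (abs : K -> R) : nonarch_abs abs ->
  forall r n, abs (r ^+ n) = abs r ^+ n.
Proof.
move=> ha; have [a1 _ _] := abs_facts ha; have [_ [_ [aM _]]] := ha.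
by move=> r; elim => [|n IH]; rewrite ?expr0 ?a1 // !exprS aM IH.
Qed.
Arguments absX {R K abs}.

Definition evs (R : realType) (X : zmodType) (nrm : X -> R) (u : nat -> X) :=
  forall e : R, 0 < e -> exists N, forall n, (N <= n)%N -> nrm (u n) < e.
Arguments evs {R X}.

Lemma evs_scale (R : realType) (K : fieldType) (abs : K -> R)
  (X : lmodType K) (nrm : X -> R) :
  nonarch_abs abs -> nonarch_norm abs nrm ->
  forall (r : K) u, evs nrm u -> evs nrm (fun n => r *: u n).
Proof.
move=> ha hn r u hu e e0; have [a0 _] := ha; have [n0 [_ [nZ _]]] := hn.
have r1 : 0 < abs r + 1 by apply: ltr_wpDl (a0 r) ltr01.
have [N HN] := hu (e / (abs r + 1)) (divr_gt0 e0 r1).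
exists N => n /HN h; rewrite nZ.
apply: (le_lt_trans (y := (abs r + 1) * nrm (u n))).
  by apply: ler_wpM2r; [exact: n0 | rewrite lerDl].
by move: h; rewrite ltr_pdivlMr // mulrC.
Qed.
Arguments evs_scale {R K abs X nrm}.

Lemma evs_sum (R : realType) (K : fieldType) (abs : K -> R)
  (X : lmodType K) (nrm : X -> R) :
  nonarch_abs abs -> nonarch_norm abs nrm ->
  forall (T : Type) (s : seq T) (F : nat -> T -> X),
  (forall t, evs nrm (fun n => F n t)) -> evs nrm (fun n => \sum_(t <- s) F n t).
Proof.
move=> ha hn T s F hF; have [n00 _ nDlt _] := norm_facts ha hn.
elim: s => [|t s IH] e e0.
  by exists 0%N => n _; rewrite big_nil n00.
have [N1 H1] := hF t e e0; have [N2 H2] := IH e e0.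
exists (maxn N1 N2) => n; rewrite geq_max => /andP [h1 h2].
by rewrite big_cons; apply: nDlt; [apply: H1 | apply: H2].
Qed.
Arguments evs_sum {R K abs X nrm}.

Lemma quartic_scale_n (K : fieldType) (X : lmodType K) (G : zmodType) (k : nat)
  (h : G -> X) : (2 * (k%:R : K) ^+ 4) != 0 -> quartic k h ->
  forall x i, h (x *+ (k ^ i)) = (k%:R : K) ^+ (4 * i) *: h x.
Proof.
move=> hk hq x; elim => [|i IH]; first by rewrite expn0 mulr1n muln0 expr0 scale1r.
rewrite expnSr mulrnA (quartic_scale _ _ _ _ _ hk hq) IH scalerA -exprD.
by rewrite mulnS addnC.
Qed.

Lemma lim_scale (R : realType) (u : nat -> R) (s : R) :
  cvgn u -> limn (fun n => s * u n) = s * limn u.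
Proof.
move=> hu; apply: cvg_lim; first exact: Rhausdorff.
exact: cvgMl_tmp.
Qed.

Theorem theorem3p1 (R : realType) (K : fieldType) (abs : K -> R)
  (X : lmodType K) (nrm : X -> R) (G : zmodType) (k : nat)
  (psi : G -> G -> R) (f : G -> X) :
  nonarch_abs abs -> nontrivial_abs abs ->
  nonarch_norm abs nrm -> norm_complete nrm ->
  abs ((2 * k ^ 4)%N%:R) != 0 ->
  (forall x y, 0 <= psi x y) ->
  (forall x y, (fun n : nat => psi (x *+ (k ^ n)) (y *+ (k ^ n))
                               / abs (k%:R) ^+ (4 * n)) @ \oo --> (0 : R)) ->
  (forall x, cvgn (fun n : nat =>
       \big[Num.max/0]_(0 <= j < n) (psi (x *+ (k ^ j)) 0 / abs (k%:R) ^+ (4 * j)))) ->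
  f 0 = 0 ->
  (forall x y, nrm (Delta k f x y) <= psi x y) ->
  exists Q : G -> X,
    quartic k Q /\
    (forall x, nrm (Q x - f x) <=
       (abs ((2 * k ^ 4)%N%:R))^-1 *
       limn (fun n : nat =>
         \big[Num.max/0]_(0 <= j < n) (psi (x *+ (k ^ j)) 0 / abs (k%:R) ^+ (4 * j)))) /\
    ((forall x, (fun i : nat =>
        limn (fun n : nat =>
          \big[Num.max/0]_(i <= j < n + i) (psi (x *+ (k ^ j)) 0 / abs (k%:R) ^+ (4 * j))))
        @ \oo --> (0 : R)) ->
     forall Q' : G -> X, quartic k Q' ->
       (forall x, nrm (Q' x - f x) <=
          (abs ((2 * k ^ 4)%N%:R))^-1 *
          limn (fun n : nat =>
            \big[Num.max/0]_(0 <= j < n) (psi (x *+ (k ^ j)) 0 / abs (k%:R) ^+ (4 * j)))) ->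
       Q' = Q).
Proof.
move=> ha hnt hn hcomp H2 psi0 Hpsi Hcv f0 Hf.
have [a1 aN aV] := abs_facts ha.
have [n00 nN nDlt nDle] := norm_facts ha hn.
have [a0 [aeq [aM aD]]] := ha.
have [nn0 [neq [nZ nD]]] := hn.
have aXX := absX ha.
set kk : K := k%:R.
have hk2 : (2 * k ^ 4)%N%:R = 2 * kk ^+ 4 :> K by rewrite natrM natrX.
have hK : 2 * kk ^+ 4 != 0.
  by apply/eqP => h0; move: H2; rewrite hk2 h0; move: (aeq 0) => [_ ->] //; rewrite eqxx.
have k0 : kk != 0 by move: hK; rewrite mulf_eq0 negb_or expf_eq0 /= => /andP [].
have t0 : (2 : K) != 0 by move: hK; rewrite mulf_eq0 negb_or => /andP [].
set c := abs kk.
have c0 : 0 < c.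
  rewrite lt_def a0 andbT; apply/eqP => /aeq h; by move: k0; rewrite h eqxx.
have cX0 : forall m, 0 < c ^+ m by move=> m; apply: exprn_gt0.
set D := abs ((2 * k ^ 4)%N%:R).
have D0 : 0 < D by rewrite lt_def H2 a0.
have Di0 : 0 <= D^-1 by rewrite invr_ge0 ltW.
have Dinv : abs ((2 * kk ^+ 4)^-1) = D^-1 by rewrite aV // /D hk2.
set a := fun x j => psi (x *+ (k ^ j)) 0 / c ^+ (4 * j).
have a0' : forall x j, 0 <= a x j by move=> x j; rewrite /a divr_ge0 // ltW.
set M := fun x n => \big[Num.max/0]_(0 <= j < n) a x j.
set g := fun n x => (kk ^+ (4 * n))^-1 *: f (x *+ (k ^ n)).
have step1 : forall x, nrm ((kk ^+ 4)^-1 *: f (x *+ k) - f x) <= D^-1 * psi x 0.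
  move=> x.
  have -> : (kk ^+ 4)^-1 *: f (x *+ k) - f x = (2 * kk ^+ 4)^-1 *: Delta k f x 0.
    rewrite Delta0g f0 scaler0 addr0 scalerBr !scalerA mulVf // scale1r.
    by congr (_ *: _ - _); field; apply/andP; split.
  by rewrite (nZ (2 * kk ^+ 4)^-1) Dinv; apply: ler_wpM2l.
have step2 : forall x n, nrm (g n.+1 x - g n x) <= D^-1 * a x n.
  move=> x n.
  have -> : g n.+1 x - g n x =
     (kk ^+ (4 * n))^-1 *: ((kk ^+ 4)^-1 *: f ((x *+ (k ^ n)) *+ k) - f (x *+ (k ^ n))).
    rewrite /g scalerBr scalerA -invfM -exprD -mulrnA -expnSr.
    have -> : (4 * n.+1 = 4 * n + 4)%N by rewrite mulnS addnC.
    by [].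
  rewrite (nZ (kk ^+ (4 * n))^-1) aV ?expf_neq0 // aXX -/c.
  apply: (le_trans (ler_wpM2l _ (step1 _))); first by rewrite invr_ge0 ltW.
  by rewrite /a mulrCA [_ * psi _ _]mulrC.
have Ha : forall x, (fun j => a x j) @ \oo --> (0 : R).
  move=> x; have -> : (fun j => a x j) =
     (fun n => psi (x *+ (k ^ n)) (0 *+ (k ^ n)) / c ^+ (4 * n)).
    by apply: funext => n; rewrite mul0rn.
  exact: Hpsi.
have Hev : forall x e, 0 < e -> exists N, forall j, (N <= j)%N -> D^-1 * a x j < e.
  move=> x e e0; have [N _ HN] := cvgr_dist_lt _ _ (Ha x) _ (mulr_gt0 e0 D0).
  exists N => j /HN /=; rewrite sub0r normrN ger0_norm // => h.
  by rewrite mulrC ltr_pdivrMr.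
have cauchy_bd : forall x e, 0 < e -> exists N, forall n d, (N <= n)%N ->
    nrm (g (n + d)%N x - g n x) < e.
  move=> x e e0; have [N HN] := Hev x e e0; exists N => n d hNn.
  elim: d => [|d IH]; first by rewrite addn0 subrr n00.
  have -> : g (n + d.+1)%N x - g n x =
      (g (n + d)%N.+1 x - g (n + d)%N x) + (g (n + d)%N x - g n x).
    by rewrite addnS addrA subrK.
  apply: nDlt => //; apply: le_lt_trans (step2 _ _) _; apply: HN.
  exact: leq_trans hNn (leq_addr _ _).
have hcauchy : forall x, norm_cauchy nrm (fun n => g n x).
  move=> x e e0; have [N HN] := cauchy_bd x e e0; exists N => m n hm hn2.
  case: (leqP n m) => h.
  - by rewrite -(subnKC h); apply: HN.
  - by rewrite -opprB nN -(subnKC (ltnW h)); apply: HN.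
have [Q HQ] : exists Q : G -> X, forall x e, 0 < e -> exists N, forall n, (N <= n)%N ->
    nrm (g n x - Q x) < e.
  have H := fun x => hcomp _ (hcauchy x).
  by have [Q HQ] := choice H; exists Q.
have gbound : forall x n, nrm (g n x - f x) <= D^-1 * M x n.
  move=> x; elim => [|n IH].
    rewrite /g /M /= muln0 expr0 invr1 scale1r expn0 mulr1n subrr n00 big_geq //.
    by rewrite mulr0.
  have -> : g n.+1 x - f x = (g n.+1 x - g n x) + (g n x - f x) by rewrite addrA subrK.
  have -> : M x n.+1 = Num.max (M x n) (a x n) by rewrite /M bigmax_recr.
  rewrite maxr_pMr //; apply: nDle.
    by apply: le_trans (step2 _ _) _; rewrite le_max lexx orbT.
  by apply: le_trans IH _; rewrite le_max lexx.
have Mnd : forall x, {homo M x : n m / (n <= m)%N >-> n <= m}.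
  move=> x; apply/nondecreasing_seqP => n.
  have -> : M x n.+1 = Num.max (M x n) (a x n) by rewrite /M bigmax_recr.
  by rewrite le_max lexx.
have Mle : forall x n, M x n <= limn (M x).
  by move=> x; apply: nondecreasing_cvgn_le (Mnd x) (Hcv x).
have Lge0 : forall x, 0 <= limn (M x).
  by move=> x; apply: le_trans (Mle x 0%N); exact: bigmax_ge0.
have hQq : quartic k Q.
move=> x y; apply/neq; apply/eqP; rewrite eq_le nn0 andbT leNgt; apply/negP => hpos.
  set e := nrm (Delta k Q x y) in hpos.
  have E1 : evs nrm (fun n => Delta k (fun z => Q z - g n z) x y).
    have -> : (fun n => Delta k (fun z => Q z - g n z) x y) =
        (fun n => \sum_(p <- dl K G k x y) p.1 *: (Q p.2 - g n p.2)).
      by apply: funext => n; rewrite DeltaE.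
    apply: (evs_sum ha hn) => p.
    apply: (evs_scale ha hn _ (fun n => Q p.2 - g n p.2)) => e' e0'.
    have [N HN] := HQ p.2 e' e0'; exists N => n /HN.
    by rewrite -opprB nN.
  have E2 : evs nrm (fun n => Delta k (g n) x y).
    move=> e' e0'; have [N _ HN] := cvgr_dist_lt _ _ (Hpsi x y) _ e0'.
    exists N => n /HN /=; rewrite sub0r normrN ger0_norm; last exact: divr_ge0 (psi0 _ _) (ltW (cX0 _)).
    move=> h.
    have -> : Delta k (g n) x y =
        (kk ^+ (4 * n))^-1 *: Delta k f (x *+ (k ^ n)) (y *+ (k ^ n)).
      by rewrite -Delta_mul -DeltaZ.
    rewrite (nZ (kk ^+ (4 * n))^-1) aV ?expf_neq0 // aXX -/c.
    apply: le_lt_trans h; rewrite mulrC; apply: ler_wpM2r; first by rewrite invr_ge0 ltW.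
    exact: Hf.
  have [N1 H1] := E1 e hpos; have [N2 H2'] := E2 e hpos.
  have : nrm (Delta k Q x y) < e.
    rewrite -[Delta k Q x y](subrK (Delta k (g (maxn N1 N2)) x y)) -DeltaB.
    by apply: nDlt; [apply: H1 | apply: H2']; rewrite leq_max leqnn ?orbT.
  by rewrite ltxx.
have hQb : forall x, nrm (Q x - f x) <= D^-1 * limn (M x).
move=> x.
  apply/ler_addgt0Pr => e e0.
  have [N HN] := HQ x e e0.
  have -> : Q x - f x = (Q x - g N x) + (g N x - f x) by rewrite addrA subrK.
  apply: nDle.
    apply: le_trans (ltW _) _; first by rewrite -opprB nN; apply: HN.
    by rewrite lerDr; exact: mulr_ge0 Di0 (Lge0 x).
  apply: le_trans (gbound x N) _.
  apply: (le_trans (ler_wpM2l Di0 (Mle x N))).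
  by rewrite lerDl ltW.
exists Q; split; [exact: hQq | split; first exact: hQb].
move=> Htail Q' hQ' hb; apply: funext => x.
set T := fun i n => \big[Num.max/0]_(i <= j < n + i) a x j.
have Tsc : forall i n, M (x *+ (k ^ i)) n = c ^+ (4 * i) * T i n.
  move=> i n.
  have -> : T i n = \big[Num.max/0]_(0 <= j < n) a x (j + i)%N.
    by rewrite /T -{1}[i]add0n big_addn addnK.
  rewrite -bigmax_scale; last exact: ltW (cX0 _).
  apply: eq_bigr => j _.
  rewrite /a -mulrnA -expnD [(i + j)%N]addnC mulnDr exprD.
  by field; rewrite !gt_eqF.
have Lsc : forall i, limn (M (x *+ (k ^ i))) = c ^+ (4 * i) * limn (T i).
  move=> i.
  have -> : T i = fun n => (c ^+ (4 * i))^-1 * M (x *+ (k ^ i)) n.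
    by apply: funext => n; rewrite Tsc mulrA mulVf ?mul1r // (gt_eqF (cX0 _)).
  rewrite lim_scale; last exact: Hcv.
  by rewrite mulrA mulfV ?mul1r // (gt_eqF (cX0 _)).
have bd : forall i, nrm (Q' x - Q x) <= D^-1 * limn (T i).
  move=> i.
  have E : Q' (x *+ (k ^ i)) - Q (x *+ (k ^ i)) = kk ^+ (4 * i) *: (Q' x - Q x).
    by rewrite (quartic_scale_n _ _ _ _ _ hK hQ') (quartic_scale_n _ _ _ _ _ hK hQq) scalerBr.
  have h1 : nrm (Q' (x *+ (k ^ i)) - Q (x *+ (k ^ i))) <= D^-1 * limn (M (x *+ (k ^ i))).
    have -> : Q' (x *+ (k ^ i)) - Q (x *+ (k ^ i)) =
        (Q' (x *+ (k ^ i)) - f (x *+ (k ^ i))) + - (Q (x *+ (k ^ i)) - f (x *+ (k ^ i))).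
      by rewrite opprB addrA subrK.
    by apply: nDle; [exact: hb | rewrite nN; exact: hQb].
  move: h1; rewrite E (nZ (kk ^+ (4 * i))) aXX -/c Lsc mulrCA.
  by rewrite ler_pM2l.
apply/eqP; rewrite -subr_eq0; apply/eqP/neq; apply/eqP.
rewrite eq_le nn0 andbT leNgt; apply/negP => dpos.
have [N _ HN] := cvgr_dist_lt _ _ (Htail x) _ (mulr_gt0 dpos D0).
have := HN N (leqnn N); rewrite /= sub0r normrN => h.
have : nrm (Q' x - Q x) < nrm (Q' x - Q x).
  apply: le_lt_trans (bd N) _.
  rewrite mulrC ltr_pdivrMr //.
  exact: le_lt_trans (ler_norm _) h.
by rewrite ltxx.
Qed.
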